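(* There exist infinitely many connected graphs $G$, with list-assignments $L$ in which $|L(w)|=\deg(w)$ for one vertex $w$ and $|L(v)|\ge\deg(v)+1$ for all other vertices $v$, such that the number of non-singleton connected components of $\mathcal{C}(G,L)$ is exponential in $|V(G)|$ (i.e. at least $c^{|V(G)|}$ for some constant $c>1$).
   Context: A list-assignment $L$ assigns to each vertex $v$ a finite set $L(v)\subseteq\mathbb{N}$; an $L$-colouring is a proper colouring $\varphi$ with $\varphi(v)\in L(v)$ for all $v$. $\mathcal{C}(G,L)$ is the graph whose vertices are the $L$-colourings of $G$, two being adjacent if one is obtained from the other by changing the colour of a single vertex (to another colour in its list, the result being proper). *)

(* Defs.v *)
From Stdlib Require Import Reals Relations.
From mathcomp Require Import all_boot.
Set Implicit Arguments. Unset Strict Implicit. Unset Printing Implicit Defensive.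

Definition simple_graph (T : finType) (e : rel T) : Prop :=
  symmetric e /\ irreflexive e.

Definition connected_graph (T : finType) (e : rel T) : Prop :=
  forall x y : T, connect e x y.

Definition deg (T : finType) (e : rel T) (v : T) : nat := #|[set u | e v u]|.

(* A list-assignment L : T -> seq nat; |L(v)| is the number of distinct colours. *)
Definition lsize (s : seq nat) : nat := size (undup s).

Definition Lcolouring (T : finType) (e : rel T) (L : T -> seq nat)
  (phi : {ffun T -> nat}) : Prop :=
  (forall v, phi v \in L v) /\ (forall u v, e u v -> phi u <> phi v).

Definition recol_adj (T : finType) (e : rel T) (L : T -> seq nat)
  (phi psi : {ffun T -> nat}) : Prop :=
  Lcolouring e L phi /\ Lcolouring e L psi /\
  exists v, phi v <> psi v /\ (forall u, u <> v -> phi u = psi u).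

Definition recol_conn (T : finType) (e : rel T) (L : T -> seq nat) :
  relation {ffun T -> nat} := clos_refl_trans _ (recol_adj e L).

Definition at_least_nonsingleton_components (T : finType) (e : rel T)
  (L : T -> seq nat) (N : nat) : Prop :=
  exists reps : 'I_N -> {ffun T -> nat},
    (forall i, Lcolouring e L (reps i)) /\
    (forall i, exists psi, recol_adj e L (reps i) psi) /\
    (forall i j, i <> j -> ~ recol_conn e L (reps i) (reps j)).

(* Main.v *)
Require Import Defs.
From Stdlib Require Import Reals Relations Lra.
From mathcomp Require Import all_boot fingroup perm.
Set Implicit Arguments. Unset Strict Implicit. Unset Printing Implicit Defensive.

Section Constr.
Variable k : nat.
Local Notation t := k.+1.
Local Notation V := (option 'I_t).

Definition E (u v : V) : bool :=
  match u, v with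
  | Some i, Some j => i != j
  | None, Some j => j == ord0
  | Some j, None => j == ord0
  | None, None => false
  end.

Definition LL (u : V) : seq nat :=
  match u with Some _ => iota 0 t | None => [:: t; t.+1] end.

Definition col (s : {perm 'I_t}) (c : nat) : {ffun V -> nat} :=
  [ffun u => match u with Some i => nat_of_ord (s i) | None => c end].

Lemma E_simple : simple_graph E.
Proof.
split.
- by case=> [i|] [j|] //=; rewrite eq_sym.
- by case=> [i|] //=; rewrite eqxx.
Qed.

Lemma E_conn : connected_graph E.
Proof.
have h : forall x, connect E x (Some ord0).
  case=> [i|].
  - case: (eqVneq i ord0) => [->|ne]; first exact: connect0.
    by apply: connect1.
  - by apply: connect1.
have hs : connect_sym E by apply: sym_connect_sym; case: E_simple.
move=> x y; apply: connect_trans (h x) _; rewrite hs; exact: h.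
Qed.

Lemma deg_some0 : deg E (Some ord0) = t.
Proof.
rewrite /deg.
have -> : [set u | E (Some ord0) u] = None |: [set Some j | j in [set~ ord0]].
  apply/setP; case=> [j|]; rewrite !inE //=.
  apply/idP/idP.
  - move=> h; apply/imsetP; exists j => //; rewrite !inE eq_sym //.
  - case/imsetP=> j' Hj [->]; move: Hj; rewrite !inE eq_sym //.
rewrite cardsU1 card_imset; last by move=> a b [].
rewrite cardsC1 card_ord.
have -> : None \notin [set Some j | j in [set~ (ord0 : 'I_t)]].
  by apply/imsetP; case.
by [].
Qed.

Lemma deg_some i : i != ord0 -> deg E (Some i) = k.
Proof.
move=> ne; rewrite /deg.
have -> : [set u | E (Some i) u] = [set Some j | j in [set~ i]].
  apply/setP; case=> [j|]; rewrite !inE //=.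
  - apply/idP/idP.
    + move=> h; apply/imsetP; exists j => //; rewrite !inE eq_sym //.
    + case/imsetP=> j' Hj [->]; move: Hj; rewrite !inE eq_sym //.
  - rewrite (negbTE ne); apply/esym/negbTE; apply/imsetP; case=> ? ? //.
by rewrite card_imset ?cardsC1 ?card_ord //; move=> a b [].
Qed.

Lemma deg_none : deg E None = 1.
Proof.
rewrite /deg.
have -> : [set u | E None u] = [set Some ord0].
  by apply/setP; case=> [j|]; rewrite !inE.
by rewrite cards1.
Qed.

Lemma lsize_some : lsize (iota 0 t) = t.
Proof. by rewrite /lsize undup_id ?iota_uniq // size_iota. Qed.

Lemma lsize_none : lsize [:: t; t.+1] = 2.
Proof.
rewrite /lsize /= inE.
have -> : (t == t.+1) = false by elim: k.
by [].
Qed.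

Lemma col_ok s c : c \in [:: t; t.+1] -> Lcolouring E LL (col s c).
Proof.
move=> hc; split.
- case=> [i|]; rewrite ffunE //=.
  by rewrite -[0 :: _]/(iota 0 t) mem_iota add0n ltn_ord.
- case=> [i|] [j|]; rewrite !ffunE //=.
  + by move=> ne /val_inj/perm_inj/eqP; rewrite (negbTE ne).
  + move=> _ h; move: (ltn_ord (s i)); rewrite h.
    by move: hc; rewrite !inE => /orP [] /eqP ->; rewrite ?ltnn // ltnNge leqnSn.
  + move=> _ h; move: (ltn_ord (s j)); rewrite -h.
    by move: hc; rewrite !inE => /orP [] /eqP ->; rewrite ?ltnn // ltnNge leqnSn.
Qed.

End Constr.

Lemma adj_inv k (p q : {ffun option 'I_k.+1 -> nat}) :
  recol_adj (@E k) (@LL k) p q -> forall i, p (Some i) = q (Some i).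
Proof.
move=> [Hp [Hq [v [hv hrest]]]] i.
case: (eqVneq (Some i) v) => [ev|ne]; last by apply: hrest => h; rewrite h eqxx in ne.
subst v; exfalso.
have lt : forall (r : {ffun option 'I_k.+1 -> nat}) j, Lcolouring (@E k) (@LL k) r -> r (Some j) < k.+1.
  move=> r j [h _]; move: (h (Some j)); rewrite /= -[0 :: _]/(iota 0 k.+1) mem_iota add0n; by case/andP.
pose f := fun j : 'I_k.+1 => (inord (p (Some j)) : 'I_k.+1).
have finj : injective f.
  move=> a b; rewrite /f => /(congr1 val) /=; rewrite !inordK ?lt // => hab.
  apply/eqP; apply/negPn/negP => nab.
  by apply: (Hp.2 (Some a) (Some b)) => //=.
case: (injF_bij finj) => g gf fg.
pose j := g (inord (q (Some i))).
have hj : p (Some j) = q (Some i).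
  have := fg (inord (q (Some i))); rewrite -/j /f => /(congr1 val) /=.
  by rewrite !inordK ?lt.
case: (eqVneq j i) => [eji|nji].
  by apply: hv; rewrite -hj eji.
apply: (Hq.2 (Some i) (Some j)); first by rewrite /= eq_sym.
rewrite -(hrest (Some j)) ?hj //.
by move=> [] /eqP; rewrite (negbTE nji).
Qed.

Lemma conn_inv k (p q : {ffun option 'I_k.+1 -> nat}) :
  recol_conn (@E k) (@LL k) p q -> forall i, p (Some i) = q (Some i).
Proof.
elim=> [x y /adj_inv //| x i0 // | x y z _ h1 _ h2 i]; by rewrite h1 h2.
Qed.

Lemma fact_big m : 2 ^ (m + 7) <= (m + 6)`!.
Proof.
elim: m => [|m IH]; first by [].
rewrite !addSn expnS factS.
apply: leq_mul => //. by rewrite ltnS addnS.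
Qed.

Lemma pow2_INR m : INR (2 ^ m) = pow (INR 2) m.
Proof.
elim: m => [|m IH]; first by [].
rewrite expnS mulnE mult_INR IH /=; reflexivity.
Qed.

Theorem mainTheorem3 :
  exists c : R, Rlt 1 c /\
  forall n : nat,
    exists (T : finType) (e : rel T) (L : T -> seq nat) (w : T),
      (n <= #|T|)%N /\
      simple_graph e /\ connected_graph e /\
      lsize (L w) = deg e w /\
      (forall v, v != w -> (deg e v + 1 <= lsize (L v))%N) /\
      exists N : nat,
        Rle (pow c #|T|) (INR N) /\ at_least_nonsingleton_components e L N.
Proof.
exists (INR 2); split; first by rewrite /=; lra.
move=> n.
pose k := n + 5.
have cT : #|{: option 'I_k.+1}| = n + 7 by rewrite card_option card_ord /k !addnS.
exists (option 'I_k.+1), (@E k), (@LL k), (Some ord0).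
split; first by rewrite cT leq_addr.
split; first exact: E_simple.
split; first exact: E_conn.
split; first by rewrite deg_some0 lsize_some.
split.
  case=> [i|] hi.
  - have ne : i != ord0 by apply: contra hi => /eqP ->.
    by rewrite deg_some // lsize_some addn1.
  - by rewrite deg_none lsize_none.
exists #|{perm 'I_k.+1}|.
split.
  rewrite cT -pow2_INR; apply: le_INR; apply/leP.
  by rewrite card_Sn /k -addnS fact_big.
exists (fun i => col (enum_val i) k.+1).
split; first by move=> i; apply: col_ok; rewrite inE eqxx.
split.
  move=> i; exists (col (enum_val i) k.+2).
  split; first by apply: col_ok; rewrite inE eqxx.
  split; first by apply: col_ok; rewrite !inE eqxx orbT.
  exists None; rewrite !ffunE; split.
    by move=> h; apply: (n_Sn k.+1).
  by case=> // j _; rewrite !ffunE.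
move=> i j nij hc.
apply: nij; apply: enum_val_inj.
apply/permP => x; apply: val_inj.
by have := conn_inv hc x; rewrite !ffunE.
Qed.
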